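(* Let $q\ge2$, $n\ge2$, $m=n-1$ and $R\in[m]$. Then $$\min_{{\boldsymbol y}\in\Sigma_{q,R}^m}\mathsf{H}^{\mathsf{In}}_{1\text{-}\mathsf{Del}}({\boldsymbol y})=\log_2(nq)-\frac{(m-R+2)\log_2(m-R+2)+2(R-1)}{nq},$$ and the minimum is attained only by skewed channel outputs.
   Context: $\Sigma_q=\{0,\dots,q-1\}$. For sequences ${\boldsymbol x}$ of length $N$ and ${\boldsymbol y}$ of length $\ell\le N$, $\omega_{{\boldsymbol y}}({\boldsymbol x})$ is the number of index tuples $1\le i_1<\dots<i_\ell\le N$ with $x_{i_j}=y_j$. The $1$-deletion channel with input length $n$ maps ${\boldsymbol x}\in\Sigma_q^n$ to ${\boldsymbol y}\in\Sigma_q^{n-1}$ with probability $\omega_{{\boldsymbol y}}({\boldsymbol x})/n$; under uniform transmission ($X$ uniform on $\Sigma_q^n$), $\mathsf{H}^{\mathsf{In}}_{1\text{-}\mathsf{Del}}({\boldsymbol y})=H(X\mid Y={\boldsymbol y})$ in bits, with posterior $P({\boldsymbol x}\mid {\boldsymbol y})=\Pr\{{\boldsymbol y}\mid{\boldsymbol x}\}/\sum_{{\boldsymbol x}'}\Pr\{{\boldsymbol y}\mid{\boldsymbol x}'\}$. A run is a maximal block of identical consecutive symbols; $\Sigma_{q,R}^m$ is the set of sequences in $\Sigma_q^m$ with exactly $R$ runs. A sequence in $\Sigma_{q,R}^m$ is skewed if it has $R-1$ runs of length one and one run of length $m-(R-1)$. *)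

(* Defs.v *)
From mathcomp Require Import all_boot all_order all_algebra.
From mathcomp Require Import reals exp.
Set Implicit Arguments. Unset Strict Implicit. Unset Printing Implicit Defensive.
Import Order.TTheory GRing.Theory Num.Theory.
Local Open Scope ring_scope.

(* Alphabet Sigma_q = 'I_q ; sequences of length N are N.-tuple 'I_q. *)

(* omega_y(x): number of index tuples i_1<...<i_l with x_{i_j} = y_j,
   i.e. number of selection masks b (of length size x) with mask b x = y. *)
Definition omega {T : eqType} (N : nat) (y : seq T) (x : N.-tuple T) : nat :=
  #|[set b : N.-tuple bool | mask b x == y]|.

Definition del1_pr {R : realType} {q : nat} (n : nat)
    (y : seq 'I_q) (x : n.-tuple 'I_q) : R :=
  (omega y x)%:R / n%:R.

Definition posterior {R : realType} {q : nat} (n : nat)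
    (y : seq 'I_q) (x : n.-tuple 'I_q) : R :=
  del1_pr y x / \sum_(x' : n.-tuple 'I_q) del1_pr y x'.

Definition log2 {R : realType} (x : R) : R := ln x / ln 2.

Definition HIn1Del {R : realType} (q n : nat) (y : seq 'I_q) : R :=
  - \sum_(x : n.-tuple 'I_q)
      (let p := @posterior R q n y x in if p == 0 then 0 else p * log2 p).

Fixpoint rl_aux {T : eqType} (a : T) (k : nat) (s : seq T) : seq nat :=
  match s with
  | [::] => [:: k]
  | b :: s' => if b == a then rl_aux a k.+1 s' else k :: rl_aux b 1 s'
  end.

Definition runlengths {T : eqType} (s : seq T) : seq nat :=
  match s with [::] => [::] | a :: s' => rl_aux a 1 s' end.

Definition nruns {T : eqType} (s : seq T) : nat := size (runlengths s).

Definition skewed {T : eqType} (m R : nat) (s : seq T) : bool :=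
  perm_eq (runlengths s) ((m - (R - 1))%N :: nseq (R - 1) 1%N).
Arguments HIn1Del {R} q n y.

(* Main.v *)
Require Import Defs.
From mathcomp Require Import all_boot all_order all_algebra.
From mathcomp Require Import reals exp.
From mathcomp Require Import zify ring lra.
Import Order.TTheory GRing.Theory Num.Theory.
Set Implicit Arguments. Unset Strict Implicit. Unset Printing Implicit Defensive.
Module MA.
Local Open Scope ring_scope.

Section Comb.
Variable T : finType.

Lemma big_tcons (R' : Type) (idx : R') (op : Monoid.com_law idx) N
  (F : N.+1.-tuple T -> R') :
  \big[op/idx]_(t : N.+1.-tuple T) F t =
  \big[op/idx]_(c : T) \big[op/idx]_(t : N.-tuple T) F [tuple of c :: t].
Proof.
rewrite pair_big /=.
rewrite (reindex (fun p : T * N.-tuple T => [tuple of p.1 :: p.2])) //=.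
exists (fun t : N.+1.-tuple T => (thead t, [tuple of behead t])).
  by move=> [c t] _ /=; congr pair; apply: val_inj.
by move=> t _; apply: val_inj => /=; rewrite [in RHS](tuple_eta t).
Qed.

Lemma big_t0 (R' : Type) (idx : R') (op : Monoid.com_law idx)
  (F : 0.-tuple T -> R') :
  \big[op/idx]_(t : 0.-tuple T) F t = F [tuple].
Proof. by rewrite (big_pred1 [tuple]) // => t; rewrite /= [t]tuple0; apply/esym/eqP. Qed.
End Comb.

End MA.
Import MA.
Module MB.

Section Comb2.
Variable T : finType.

Fixpoint sc (y x : seq T) : nat :=
  match x with
  | [::] => (y == [::])
  | c :: x' => sc y x' + (if y is a :: y' then (c == a) * sc y' x' else 0)
  end.

Lemma card_sum N (P : pred (N.-tuple bool)) :
  #|[set b | P b]| = \sum_(b : N.-tuple bool) (P b : nat).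
Proof. by rewrite cardsE -sum1_card big_mkcond. Qed.

Lemma omega_sc N (y : seq T) (x : N.-tuple T) : omega y x = sc y x.
Proof.
rewrite /omega card_sum.
elim: N y x => [|N IH] y x.
  by rewrite big_t0 [x]tuple0 /= eq_sym.
case: x => -[|c x'] Hx //.
have Hx' : size x' == N by [].
have -> : sc y (c :: x') = sc y (Tuple Hx') +
   (if y is a :: y' then (c == a) * sc y' (Tuple Hx') else 0) by [].
rewrite -!IH big_tcons big_bool /= addnC; congr (_ + _).
case: y => [|a y'] /=.
  by rewrite big1.
rewrite -(IH y' (Tuple Hx')) big_distrr /=; apply: eq_bigr => b _.
rewrite eqseq_cons; by case: (c == a); rewrite ?mul1n ?mul0n.
Qed.

Lemma sc_short y x : (size x < size y)%N -> sc y x = 0%N.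
Proof.
elim: x y => [|c x IH] [|a y] //= H.
by rewrite IH ?(ltnW H) // IH // muln0.
Qed.

Lemma sc_eqsize y x : size x = size y -> sc y x = (x == y).
Proof.
elim: x y => [|c x IH] [|a y] //= [H].
rewrite sc_short /= ?H // IH // eqseq_cons.
by rewrite add0n; case: (c == a); case: (x == y).
Qed.

Fixpoint run0 (a : T) (s : seq T) : nat :=
  if s is b :: s' then (if b == a then (run0 a s').+1 else 0) else 0.

Lemma sc_self a y : sc y (a :: y) = (run0 a y).+1.
Proof.
elim: y a => [|b y IH] a //.
have -> : sc (b :: y) (a :: b :: y) = sc (b :: y) (b :: y) + (a == b) * sc y (b :: y) by [].
rewrite sc_eqsize // eqxx IH /= [b == a]eq_sym.
by case: eqP => [->|_]; rewrite ?mul1n ?mul0n.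
Qed.
End Comb2.

End MB.
Import MB.
Module MC.
Local Open Scope ring_scope.

Section Phi.
Variable T : finType.
Variable R : zmodType.
Variable g : nat -> R.
Hypothesis g0 : g 0%N = 0.

Definition Phi (y : seq T) : R := \sum_(x : (size y).+1.-tuple T) g (sc y x).

Lemma sum_indic N (y : N.-tuple T) : \sum_(x : N.-tuple T) g (x == y :> seq T) = g 1%N.
Proof.
rewrite (bigD1 y) //= eqxx big1 ?addr0 // => x Hx.
by rewrite val_eqE (negbTE Hx).
Qed.

Lemma Phi_cons a y' :
  Phi (a :: y') = g 1%N *+ (#|T|.-1) + Phi y' - g (run0 a y').+1 + g (run0 a y').+2.
Proof.
rewrite /Phi big_tcons (bigD1 a) //=.
set y := a :: y'.
have Ey : forall x' : (size y).-tuple T, sc y x' = (x' == y :> seq T).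
  by move=> x'; rewrite sc_eqsize // size_tuple.
have -> : \sum_(c | c != a) \sum_(t : (size y).-tuple T) g (sc y (c :: t)) = g 1%N *+ #|T|.-1.
  rewrite -(cardC1 a) -sumr_const; apply: eq_bigr => c Hc.
  rewrite -(sum_indic (in_tuple y)); apply: eq_bigr => t _.
  by rewrite /= Ey (negbTE Hc) mul0n addn0.
rewrite addrC -!addrA; congr (_ + _).
have -> : \sum_(t : (size y).-tuple T) g (sc y (a :: t)) =
          \sum_(t : (size y).-tuple T) g ((t == y :> seq T) + sc y' t)%N.
  by apply: eq_bigr => t _; rewrite /= Ey eqxx mul1n.
rewrite (bigD1 (in_tuple y)) // [in RHS](bigD1 (in_tuple y)) //.
have E1 : sc y' (in_tuple y) = (run0 a y').+1 := sc_self a y'.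
have E2 : (in_tuple y == y :> seq T) = true := eqxx _.
rewrite E1 E2 add1n.
have aux : forall u v S S' : R, S = S' -> v + S = u + S' + (- u + v).
  by move=> u v S S' ->; rewrite addrA (addrAC u) subrr add0r addrC.
apply: aux; apply: eq_bigr => t Ht.
have -> : (t == y :> seq T) = (t == in_tuple y) by [].
by move: Ht => /= /negbTE ->.
Qed.
End Phi.

End MC.
Import MC.
Module MD.
Local Open Scope ring_scope.

Section Runs.
Variable T : finType.
Fixpoint rl_rest (a : T) (s : seq T) : seq nat :=
  match s with
  | [::] => [::]
  | b :: s' => if b == a then rl_rest a s' else rl_aux b 1 s'
  end.

Lemma rl_auxE a k s : rl_aux a k s = (k + run0 a s)%N :: rl_rest a s.
Proof.
elim: s a k => [|b s IH] a k /=; first by rewrite addn0.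
by case: (b == a); rewrite ?IH ?addn0 ?addnS.
Qed.
End Runs.

Section PhiT.
Variable T : finType.
Variable R : zmodType.

Lemma Phi_nil (g : nat -> R) : Phi g ([::] : seq T) = g 1%N *+ #|T|.
Proof.
rewrite /Phi big_tcons -sumr_const; apply: eq_bigr => c _.
by rewrite big_t0.
Qed.

Lemma Phi_runs (g : nat -> R) : g 0%N = 0 -> g 1%N = 0 ->
  forall y : seq T, Phi g y = \sum_(r <- runlengths y) g r.+1.
Proof.
move=> g0 g1; elim => [|a y' IH].
  by rewrite Phi_nil g1 mul0rn big_nil.
rewrite Phi_cons // g1 mul0rn add0r IH.
case: y' IH => [|b y''] IH /=.
  by rewrite big_nil big_seq1 add0r g1 oppr0 add0r.
rewrite !rl_auxE /=.
case: eqP => [->|ne] /=.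
  rewrite !big_cons.
  have -> : (2 + run0 a y'')%N = (run0 a y'').+2 by [].
  have -> : (1 + run0 a y'')%N = (run0 a y'').+1 by [].
  by rewrite (addrC (g _)) addrK addrC.
by rewrite !big_cons g1 subr0 addrC.
Qed.

End PhiT.
Lemma Phi_sum (T : finType) (R' : pzRingType) : forall y : seq T, Phi (fun k => (k%:R : R')) y = (#|T| * (size y).+1)%:R.
Proof.
elim => [|a y' IH].
  by rewrite Phi_nil muln1.
rewrite Phi_cons // IH -[(run0 a y').+2]addn1 natrD addrA subrK.
have q0 : (0 < #|T|)%N by apply/card_gt0P; exists a.
rewrite -!natrD; congr (_%:R) => /=.
by rewrite -subn1 [in RHS]mulnS addnAC subnK.
Qed.


End MD.
Import MD.
Module ME.
Local Open Scope ring_scope.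

Section Ent.
Variable R : realType.

Definition gl (k : nat) : R := k%:R * log2 (k%:R : R).

Lemma gl0 : gl 0 = 0. Proof. by rewrite /gl mul0r. Qed.
Lemma gl1 : gl 1 = 0. Proof. by rewrite /gl /log2 ln1 mul0r mulr0. Qed.

Lemma HIn_formula q (y : seq 'I_q) : (0 < q)%N ->
  let N := ((size y).+1 * q)%N in
  @HIn1Del R q (size y).+1 y =
  log2 (N%:R : R) - (\sum_(r <- runlengths y) gl r.+1) / N%:R.
Proof.
move=> q0 N.
have N0 : (0 : R) < N%:R by rewrite ltr0n /N muln_gt0.
have n0 : (0 : R) < (size y).+1%:R by rewrite ltr0n.
have Hsum : \sum_(x : (size y).+1.-tuple 'I_q) del1_pr y x = q%:R :> R.
  rewrite /del1_pr -mulr_suml.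
  under eq_bigr do rewrite omega_sc.
  have := Phi_sum R y; rewrite /Phi card_ord => ->.
  by rewrite natrM mulfK // gt_eqF.
rewrite /HIn1Del /posterior Hsum.
have Hterm : forall x : (size y).+1.-tuple 'I_q,
   (if @del1_pr R _ _ y x / q%:R == 0 then 0 else @del1_pr R _ _ y x / q%:R * log2 (@del1_pr R _ _ y x / q%:R)) =
   gl (sc y x) / N%:R - log2 (N%:R : R) * ((sc y x)%:R / N%:R).
  move=> x /=.
  have -> : del1_pr y x / q%:R = (sc y x)%:R / N%:R :> R.
    by rewrite /del1_pr omega_sc /N natrM invfM mulrA.
  case: (posnP (sc y x)) => [->|w0].
    by rewrite mul0r eqxx gl0 mul0r mulr0 subr0.
  rewrite mulf_eq0 invr_eq0 (gt_eqF N0) pnatr_eq0 (negbTE (lt0n_neq0 w0)) /=.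
  rewrite /gl /log2 ln_div ?posrE ?ltr0n ?muln_gt0 ?q0 //.
  set w : R := (sc y x)%:R; set M : R := N%:R; set l1 := ln w; set l2 := ln M; set l := ln (2 : R).
  clearbody w M l1 l2 l. ring.
under eq_bigr do rewrite Hterm.
rewrite sumrB -mulr_suml -mulr_sumr -mulr_suml.
have -> : \sum_(x : (size y).+1.-tuple 'I_q) gl (sc y x) = \sum_(r <- runlengths y) gl r.+1.
  by have := Phi_runs gl0 gl1 y; rewrite /Phi.
have -> : \sum_(x : (size y).+1.-tuple 'I_q) (sc y x)%:R = N%:R :> R.
  by have := Phi_sum R y; rewrite /Phi card_ord mulnC.
rewrite mulfV ?gt_eqF // mulr1 opprB.
by [].
Qed.
End Ent.

End ME.
Import ME.
Module MF.
Local Open Scope ring_scope.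

Section Ineq.
Variable R : realType.

Lemma ln_lt_sub1 (x : R) : 0 < x -> x != 1 -> ln x < x - 1.
Proof.
move=> x0 x1.
have lx : ln x != 0 by rewrite ln_eq0.
have := expR_gt1Dx lx; rewrite lnK ?posrE // => H.
by rewrite ltrBrDl.
Qed.

Lemma ln_le_sub1 (x : R) : 0 < x -> ln x <= x - 1.
Proof.
move=> x0; have := expR_ge1Dx (ln x); rewrite lnK ?posrE // => H.
by rewrite lerBrDl.
Qed.

Lemma ln2_gt0 : 0 < ln (2 : R).
Proof. by rewrite ln_gt0 // ltr1n. Qed.

Lemma gl2 : gl R 2 = 2.
Proof. by rewrite /gl /log2 mulfV ?mulr1 // gt_eqF // ln2_gt0. Qed.

Definition D (k : nat) : R := gl R k.+1 - gl R k.

Lemma D_lt k : (0 < k)%N -> D k < D k.+1.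
Proof.
move=> k0.
have l2 := ln2_gt0.
have kp : (0 : R) < k%:R by rewrite ltr0n.
set a := ln (k%:R : R); set b := ln (k.+1%:R : R); set c := ln (k.+2%:R : R).
have F1 : k%:R * (b - a) < 1.
  have := @ln_lt_sub1 (k.+1%:R / k%:R).
  rewrite ln_div ?posrE ?ltr0n // divr_gt0 ?ltr0n //.
  have ne : (k.+1%:R / k%:R : R) != 1.
    apply/eqP => H.
    have := congr1 (fun z => z * k%:R) H; rewrite /= mulfVK ?lt0r_neq0 // mul1r.
    by move/eqP; rewrite eqr_nat => /eqP; lia.
  move=> /(_ isT ne) H.
  rewrite -(ltr_pM2l kp) in H.
  have E : k%:R * (k.+1%:R / k%:R - 1) = 1 :> R by field; exact: lt0r_neq0.
  by rewrite E in H.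
have F2 : 1 <= k.+2%:R * (c - b).
  have := @ln_le_sub1 (k.+1%:R / k.+2%:R).
  rewrite ln_div ?posrE ?ltr0n // divr_gt0 ?ltr0n // => /(_ isT) H.
  have kp2 : (0 : R) < k.+2%:R by rewrite ltr0n.
  rewrite -(ler_pM2l kp2) in H.
  have E : k.+2%:R * (k.+1%:R / k.+2%:R - 1) = - 1 :> R by field; apply/negP => /eqP H0; lra.
  rewrite E -/b -/c mulrBr in H; rewrite mulrBr; lra.
rewrite /D /gl /log2 -/a -/b -/c.
rewrite -subr_gt0.
have -> : k.+2%:R * (c / ln 2) - k.+1%:R * (b / ln 2) - (k.+1%:R * (b / ln 2) - k%:R * (a / ln 2))
   = (k.+2%:R * (c - b) - k%:R * (b - a)) / ln 2 :> R.
  by field; exact: lt0r_neq0.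
by rewrite divr_gt0 //; lra.
Qed.

Lemma D_le i j : (0 < i)%N -> (i <= j)%N -> D i <= D j.
Proof.
move=> i0; elim: j => [|j IH] Hij; first by move: i0 Hij; case: i.
case: (ltngtP i j.+1) Hij => // [Hlt _|-> _]; last by [].
apply: le_trans (IH Hlt) (ltW (D_lt _)); lia.
Qed.

Lemma D_lt2 i j : (0 < i)%N -> (i < j)%N -> D i < D j.
Proof. move=> i0 ij; apply: lt_le_trans (D_lt i0) (D_le _ ij) => //. Qed.

Lemma key a b : (0 < a)%N -> (0 < b)%N ->
  gl R a.+1 + gl R b.+1 <= gl R (a + b) + gl R 2 /\
  ((1 < a)%N -> (1 < b)%N -> gl R a.+1 + gl R b.+1 < gl R (a + b) + gl R 2).
Proof.
move=> a0; elim: b => [|b IH] // _.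
case: (posnP b) => [->|b0].
  by rewrite addn1; split; [lra | move=> _; lia].
have [IH1 IH2] := IH b0.
have HD : D b.+1 <= D (a + b) by apply: D_le; lia.
have HD2 : (1 < a)%N -> D b.+1 < D (a + b) by move=> a1; apply: D_lt2; lia.
move: HD HD2; rewrite /D addnS => HD HD2.
split; first lra.
move=> a1 _.
have := HD2 a1.
lra.
Qed.
End Ineq.

End MF.
Import MF.
Module MG.
Local Open Scope ring_scope.

Section L.
Variable R : realType.
Definition Gs (s : seq nat) : R := \sum_(r <- s) gl R r.+1.

Lemma size_le_sumn s : all (fun r => 0 < r)%N s -> (size s <= sumn s)%N.
Proof. elim: s => [|r s IH] //= /andP [r0 /IH]; lia. Qed.

Lemma list_bound (s : seq nat) : s != [::] -> all (fun r => 0 < r)%N s ->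
  Gs s <= gl R (sumn s - size s).+2 + (size s).-1%:R * gl R 2 /\
  (Gs s = gl R (sumn s - size s).+2 + (size s).-1%:R * gl R 2 ->
     perm_eq s ((sumn s - (size s - 1))%N :: nseq (size s - 1)%N 1%N)).
Proof.
elim: s => [|r s' IH] // _ /andP [r0 Hall].
case: s' IH Hall => [|r' s''] IH Hall.
  rewrite /Gs big_seq1 /= mul0r addr0 addn0 subn0.
  have -> : (r - 1).+2 = r.+1 by lia.
  by split => // _; rewrite perm_refl.
have [IH1 IH2] := IH isT Hall.
have Hle := @size_le_sumn (r' :: s'') Hall.
move: IH1 IH2 Hle.
set s' := r' :: s''.
have -> : Gs (r :: s') = gl R r.+1 + Gs s' by rewrite /Gs big_cons.
have -> : size (r :: s') = (size s').+1 by [].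
have -> : sumn (r :: s') = (r + sumn s')%N by [].
set M := sumn s'; set S := size s'.
have S0 : (0 < S)%N by [].
have -> : (S.+1.-1) = S by [].
move=> IH1 IH2 Hle.
have [K1 K2] := @key R r (M - S).+1 r0 isT.
have E1 : (r + M - S.+1).+2 = (r + (M - S).+1)%N by lia.
have E2 : S%:R = S.-1%:R + 1 :> R by rewrite natr1 prednK.
rewrite E1 E2 mulrDl mul1r.
split; first lra.
move=> Heq.
have Heq' : Gs s' = gl R (M - S).+2 + S.-1%:R * gl R 2 by lra.
have P := IH2 Heq'.
have -> : (S.+1 - 1 = S)%N by lia.
have -> : (r + M - S = r + (M - S))%N by lia.
have E3 : (M - (S - 1) = (M - S).+1)%N by lia.
rewrite E3 in P.
case: (ltnP 1 r) => r1.
  case: (posnP (M - S)) => t0.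
    rewrite t0 addn0 in P *.
    rewrite perm_cons; apply: perm_trans P _.
    by rewrite /S /= subn1.
  have := K2 r1 t0. lra.
have -> : r = 1%N by lia.
apply: (@perm_trans _ (1%N :: (M - S).+1 :: nseq (S - 1) 1%N)).
  by rewrite perm_cons.
rewrite add1n.
have -> : nseq S 1%N = 1%N :: nseq (S - 1) 1%N by rewrite /S /= subn1.
by apply/permP => p /=; rewrite addnCA.
Qed.
End L.

End MG.
Import MG.
Module MH.
Local Open Scope ring_scope.
Section R1.
Variable T : eqType.
Lemma rl_aux_sumn (a : T) k s : sumn (rl_aux a k s) = (k + size s)%N.
Proof.
elim: s a k => [|b s IH] a k /=; first by rewrite !addn0.
case: (b == a) => /=; rewrite IH; lia.
Qed.

Lemma rl_aux_pos (a : T) k s : (0 < k)%N -> all (fun r => 0 < r)%N (rl_aux a k s).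
Proof.
elim: s a k => [|b s IH] a k k0 /=; first by rewrite k0.
by case: (b == a); rewrite /= ?IH ?k0.
Qed.

Lemma runs_sumn (s : seq T) : sumn (runlengths s) = size s.
Proof. by case: s => [|a s] //=; rewrite rl_aux_sumn. Qed.

Lemma runs_pos (s : seq T) : all (fun r => 0 < r)%N (runlengths s).
Proof. by case: s => [|a s] //=; rewrite rl_aux_pos. Qed.

Lemma rl_aux_nseq (a : T) k L t : rl_aux a k (nseq L a ++ t) = rl_aux a (k + L) t.
Proof.
elim: L k => [|L IH] k /=; first by rewrite addn0.
by rewrite eqxx IH addnS.
Qed.

Fixpoint alt (a b : T) (K : nat) : seq T :=
  if K is K'.+1 then b :: alt b a K' else [::].

Lemma size_alt a b K : size (alt a b K) = K.
Proof. by elim: K a b => [|K IH] a b //=; rewrite IH. Qed.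

Lemma rl_aux_alt (a b : T) k K : a != b -> rl_aux a k (alt a b K) = k :: nseq K 1%N.
Proof.
elim: K a b k => [|K IH] a b k ab //=.
by rewrite eq_sym (negbTE ab) IH // eq_sym.
Qed.
End R1.

Lemma Gs_ones (R : realType) K : Gs R (nseq K 1%N) = K%:R * gl R 2.
Proof.
elim: K => [|K IH]; first by rewrite /Gs big_nil mul0r.
by rewrite /Gs /= big_cons -/(Gs R _) IH -[K.+1]addn1 natrD mulrDl mul1r addrC.
Qed.

Lemma HIn_formula' (R : realType) q n (y : seq 'I_q) : (0 < q)%N -> n = (size y).+1 ->
  @HIn1Del R q n y = log2 ((n * q)%N%:R : R) - Gs R (runlengths y) / (n * q)%N%:R.
Proof. by move=> q0 ->; rewrite HIn_formula. Qed.

End MH.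
Import MH.
Local Open Scope ring_scope.
Theorem lemma8 (R : realType) (q n Rr : nat) :
  (2 <= q)%N -> (2 <= n)%N -> (1 <= Rr)%N -> (Rr <= n.-1)%N ->
  let m := n.-1 in
  let Hmin : R :=
    log2 ((n * q)%:R) -
    (((m - Rr + 2)%N)%:R * log2 (((m - Rr + 2)%N)%:R) + 2 * (Rr - 1)%:R)
      / (n * q)%:R in
  [/\ exists y : m.-tuple 'I_q, nruns y = Rr /\ @HIn1Del R q n y = Hmin,
      forall y : m.-tuple 'I_q, nruns y = Rr -> Hmin <= @HIn1Del R q n y
    & forall y : m.-tuple 'I_q, nruns y = Rr -> @HIn1Del R q n y = Hmin ->
        skewed m Rr y].
Proof.
move=> q2 n2 R1 Rm m Hmin.
have q0 : (0 < q)%N by lia.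
have N0 : (0 : R) < (n * q)%N%:R by rewrite ltr0n muln_gt0; apply/andP; split; lia.
set B : R := gl R (m - Rr).+2 + Rr.-1%:R * gl R 2.
have HB : Hmin = log2 ((n * q)%N%:R : R) - B / (n * q)%N%:R.
  rewrite /Hmin /B gl2 /gl (_ : (m - Rr + 2 = (m - Rr).+2)%N); last by lia.
  by rewrite -subn1 [_ * 2]mulrC.
have HH : forall y : m.-tuple 'I_q,
    @HIn1Del R q n y = log2 ((n * q)%N%:R : R) - Gs R (runlengths y) / (n * q)%N%:R.
  move=> y; apply: HIn_formula' => //; rewrite size_tuple /m; lia.
have LB : forall y : m.-tuple 'I_q, nruns y = Rr ->
    Gs R (runlengths y) <= B /\ (Gs R (runlengths y) = B -> skewed m Rr y).
  move=> y Hy.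
  have ne : runlengths y != [::] by apply/eqP => E; move: Hy; rewrite /nruns E /=; lia.
  have := list_bound R ne (runs_pos y).
  rewrite runs_sumn size_tuple -/(nruns y) Hy.
  by case=> H1 H2; split.
have ab : (Ordinal q0 : 'I_q) != Ordinal q2 by [].
set a : 'I_q := Ordinal q0; set b : 'I_q := Ordinal q2.
set ys := a :: (nseq (m - Rr) a ++ alt a b (Rr - 1)).
have Hsz : size ys == m by rewrite /= size_cat size_nseq size_alt; apply/eqP; lia.
have Hrl : runlengths ys = (1 + (m - Rr))%N :: nseq (Rr - 1) 1%N.
  by rewrite /= rl_aux_nseq rl_aux_alt.
split.
- exists (Tuple Hsz); split.
    by rewrite /nruns (_ : runlengths _ = runlengths ys) // Hrl /= size_nseq; lia.
  rewrite HB HH (_ : runlengths _ = runlengths ys) // Hrl; congr (_ - _ / _).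
  rewrite /Gs big_cons -/(Gs R _) Gs_ones /B subn1 add1n.
  by [].
- move=> y Hy; rewrite HB HH lerD2l lerN2 ler_pM2r ?invr_gt0 //.
  by case: (LB y Hy).
- move=> y Hy; rewrite HB HH => /addrI/oppr_inj/(mulIf (invr_neq0 (lt0r_neq0 N0))).
  by case: (LB y Hy) => _; apply.
Qed.
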